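(* Let $m,n\ge 2$ and $p,q\ge 0$ be integers, and let $\bm{i}=(i_1,\dots,i_p),\bm{k}=(k_1,\dots,k_p)\in\{1,\dots,m\}^{\times p}$ and $\bm{j}=(j_1,\dots,j_q),\bm{l}=(l_1,\dots,l_q)\in\{1,\dots,n\}^{\times q}$. For each $\sigma\in\mathfrak{S}_{p+q}$, $$\sum_{s_1,\dots,s_q=1}^m\delta_\sigma(\bm{i}\cup\bm{s},\bm{k}\cup\bm{s})=\delta_{\mathrm{pr}_1(\sigma)}(\bm{i},\bm{k})\,m^{\kappa_1(\sigma)},\qquad \sum_{t_1,\dots,t_p=1}^n\delta_\sigma(\bm{t}\cup\bm{j},\bm{t}\cup\bm{l})=\delta_{\mathrm{pr}_2(\sigma)}(\bm{j},\bm{l})\,n^{\kappa_2(\sigma)}.$$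
   Context: $\bm{i}\cup\bm{s}$ denotes the concatenated sequence $(i_1,\dots,i_p,s_1,\dots,s_q)$ of length $p+q$, and similarly for $\bm{k}\cup\bm{s}$, $\bm{t}\cup\bm{j}=(t_1,\dots,t_p,j_1,\dots,j_q)$, $\bm{t}\cup\bm{l}$. For $\sigma\in\mathfrak{S}_d$ and sequences $\bm{a},\bm{b}$ of length $d$, $\delta_\sigma(\bm{a},\bm{b})=\prod_{r=1}^d\delta(a_{\sigma(r)},b_r)$ (Kronecker delta). For $\sigma\in\mathfrak{S}_{p+q}$: $\mathrm{pr}_1(\sigma)\in\mathfrak{S}_p$ is obtained by writing $\sigma$ as a product of disjoint cycles and erasing the letters $p+1,\dots,p+q$ from each cycle; $\mathrm{pr}_2(\sigma)\in\mathfrak{S}_q$ is obtained by erasing the letters $1,\dots,p$ from each cycle and relabeling $p+1,\dots,p+q$ as $1,\dots,q$. $\kappa_1(\sigma)$ is the number of cycles of $\sigma$ whose support is contained in $\{p+1,\dots,p+q\}$, and $\kappa_2(\sigma)$ the number of cycles whose support is contained in $\{1,\dots,p\}$. *)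

(* Defs.v *)
(* Indices are 0-based: {1..m} is 'I_m, the letters
   1..p of S_(p+q) are the ordinals < p, and p+1..p+q are those >= p. *)
From mathcomp Require Import all_boot all_order all_fingroup.
Set Implicit Arguments. Unset Strict Implicit. Unset Printing Implicit Defensive.

Definition delta_perm (d : nat) (T : eqType) (s : 'S_d) (a b : 'I_d -> T) : nat :=
  \prod_(r < d) (a (s r) == b r).

(* delta for a general self-map of 'I_d (used for pr1/pr2, which are
   permutations but are given here as plain functions) *)
Definition delta_fun (d : nat) (T : eqType) (f : 'I_d -> 'I_d) (a b : 'I_d -> T) : nat :=
  \prod_(r < d) (a (f r) == b r).

Definition concat (p q : nat) (T : Type) (a : 'I_p -> T) (b : 'I_q -> T)
  (r : 'I_(p + q)) : T :=
  match split r with inl x => a x | inr y => b y end.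

Fixpoint walk (d : nat) (s : 'S_d) (P : pred 'I_d) (fuel : nat) (z : 'I_d) : 'I_d :=
  match fuel with
  | 0 => z
  | fuel'.+1 => let z' := s z in if P z' then z' else walk s P fuel' z'
  end.

(* pr1(sigma): erase letters p..p+q-1 from the cycles of sigma, i.e. map x
   to the next element of its cycle that lies in {0..p-1} *)
Definition pr1 (p q : nat) (s : 'S_(p + q)) (x : 'I_p) : 'I_p :=
  insubd x (val (walk s (fun r : 'I_(p + q) => val r < p) (p + q) (lshift q x))).

(* pr2(sigma): erase letters 0..p-1 and relabel p+j as j *)
Definition pr2 (p q : nat) (s : 'S_(p + q)) (y : 'I_q) : 'I_q :=
  insubd y (val (walk s (fun r : 'I_(p + q) => p <= val r) (p + q) (rshift p y)) - p).

Definition kappa1 (p q : nat) (s : 'S_(p + q)) : nat :=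
  #|[set C in porbits s | C \subset [set r : 'I_(p + q) | p <= val r]]|.

Definition kappa2 (p q : nat) (s : 'S_(p + q)) : nat :=
  #|[set C in porbits s | C \subset [set r : 'I_(p + q) | val r < p]]|.

(* Main.v *)
Require Import Defs.
From mathcomp Require Import all_boot all_order all_fingroup zify.
Set Implicit Arguments. Unset Strict Implicit. Unset Printing Implicit Defensive.

Lemma prod_bool (I : finType) (P : pred I) (b : I -> bool) :
  \prod_(i | P i) (b i : nat) = [forall i, P i ==> b i].
Proof.
case: (boolP [forall i, P i ==> b i]) => [/forallP H | /forallPn [r Hr]].
  by rewrite big1 // => i Pi; have := H i; rewrite Pi /= => ->.
move: Hr; rewrite negb_imply => /andP [Pr br].
by rewrite (bigD1 r) //= (negbTE br) mul0n.
Qed.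

Lemma sum_bool (I : finType) (b : I -> bool) :
  \sum_i (b i : nat) = #|[set i | b i]|.
Proof.
rewrite -sum1_card [RHS]big_mkcond /=; apply: eq_bigr => i _; by rewrite inE; case: (b i).
Qed.

Section Walk.
Variables (d : nat) (s : 'S_d) (P : pred 'I_d).

Lemma walk_eq fuel z n : 0 < n <= fuel -> P (iter n s z) ->
  (forall j, 0 < j < n -> ~~ P (iter j s z)) -> walk s P fuel z = iter n s z.
Proof.
elim: fuel z n => [|f IH] z n; first by case: n => // ? /andP [].
case: n => // [[|n]] /andP [_ nf] Pn mn /=.
  by rewrite /= in Pn *; rewrite Pn.
have -> : P (s z) = false by apply/negbTE; apply: (mn 1).
rewrite -[RHS]/(iter n.+2 s z) iterSr; apply: IH; first by rewrite ltn0Sn.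
  by rewrite -iterSr.
by move=> j /andP [j0 jn]; rewrite -iterSr; apply: mn; rewrite ltnS.
Qed.

Lemma walk_min fuel z n : 0 < n <= fuel -> P (iter n s z) ->
  exists k, [/\ 0 < k <= n, walk s P fuel z = iter k s z, P (iter k s z)
            & forall j, 0 < j < k -> ~~ P (iter j s z)].
Proof.
move=> /andP [n0 nf] Pn.
have ex : exists k, (0 < k) && P (iter k s z) by exists n; rewrite n0 Pn.
case: (ex_minnP ex) => k /andP [k0 Pk] kmin.
have kn : k <= n by apply: kmin; rewrite n0 Pn.
have km : forall j, 0 < j < k -> ~~ P (iter j s z).
  move=> j /andP [j0 jk]; apply/negP => Pj.
  by have := kmin j; rewrite j0 Pj => /(_ isT); rewrite leqNgt jk.
exists k; split => //; first by rewrite k0.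
by apply: walk_eq => //; rewrite k0 (leq_trans kn nf).
Qed.

End Walk.

Lemma porbit_iter d (s : 'S_d) z x : x \in porbit s z ->
  exists2 i, i < #|porbit s z| & x = iter i s z.
Proof. by rewrite porbit_traject => /trajectP. Qed.

Lemma card_porbit_le d (s : 'S_d) z : #|porbit s z| <= d.
Proof. by have := max_card (porbit s z); rewrite card_ord. Qed.

Lemma iter_mem d (s : 'S_d) z n : iter n s z \in porbit s z.
Proof. by rewrite -permX mem_porbit. Qed.

Lemma iter_sV d (s : 'S_d) r a j : j <= a -> iter j s (iter a (s^-1)%g r) = iter (a - j) (s^-1)%g r.
Proof.
elim: j => [|j IH] ja; first by rewrite subn0.
rewrite iterS IH ?(ltnW ja) //.
have -> : a - j = (a - j.+1).+1 by rewrite subnS prednK // subn_gt0.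
by rewrite iterS permKV.
Qed.
Lemma lt01 j : (0 < j < 1) = false. Proof. by case: j. Qed.

Section Main.
Variables (d : nat) (J T : finType) (t0 : T) (s : 'S_d) (Fx Fr : pred 'I_d).
Hypothesis hF : forall r, Fr r = ~~ Fx r.
Variable e : J -> 'I_d.
Hypotheses (einj : injective e) (esurj : forall r, Fr r -> exists y, r = e y)
  (eFr : forall y, Fr (e y)).
Variables (A B : 'I_d -> T) (G H : {ffun J -> T} -> 'I_d -> T).
Hypotheses (hGe : forall f y, G f (e y) = f y) (hHe : forall f y, H f (e y) = f y)
  (hGx : forall f r, Fx r -> G f r = A r) (hHx : forall f r, Fx r -> H f r = B r).

Let si := (s^-1)%g.
Definition fwd x := walk s Fx d x.
Definition back y := walk si Fx d y.
Definition pure z := porbit s z \subset [set r | Fr r].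
Definition PC := [set C in porbits s | C \subset [set r | Fr r]].
Definition PCT := {C : {set 'I_d} | C \in PC}.
Definition valid (f : {ffun J -> T}) := [forall r, G f (s r) == H f r].
Definition cons := [forall x, Fx x ==> (A (fwd x) == B x)].

Lemma free_eq f r : Fr r -> G f r = H f r.
Proof. by move=> /esurj [y ->]; rewrite hGe hHe. Qed.

Lemma FrN r : Fr r -> ~~ Fx r. Proof. by rewrite hF. Qed.
Lemma FxN r : Fx r -> ~~ Fr r. Proof. by rewrite hF negbK. Qed.

Lemma chain_fwd f (V : valid f) z n : 0 < n ->
  (forall j, 0 < j < n -> Fr (iter j s z)) -> G f (iter n s z) = H f z.
Proof.
move/forallP: V => V.
elim: n => // [[|n] IH] _ hj; first by apply/eqP; apply: V.
rewrite iterS; move/eqP: (V (iter n.+1 s z)) => ->.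
rewrite -free_eq; last by apply: hj; rewrite /= ltnS leqnn.
by apply: IH => // j /andP [j0 jn]; apply: hj; rewrite j0 (ltn_trans jn).
Qed.

Lemma chain_bwd f (V : valid f) z n : 0 < n ->
  (forall j, 0 < j < n -> Fr (iter j si z)) -> H f (iter n si z) = G f z.
Proof.
move/forallP: V => V.
have E w : H f (si w) = G f w by move/eqP: (V (si w)); rewrite /si permKV.
elim: n => // [[|n] IH] _ hj; first by apply: E.
rewrite iterS E free_eq; last by apply: hj; rewrite /= ltnS leqnn.
by apply: IH => // j /andP [j0 jn]; apply: hj; rewrite j0 (ltn_trans jn).
Qed.

Lemma orbit_fixed z : ~~ pure z -> exists2 x, x \in porbit s z & Fx x.
Proof.
by case/subsetPn => x xin; rewrite inE hF negbK => Fxx; exists x.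
Qed.

Lemma back_spec z : Fr z -> ~~ pure z -> exists a, [/\ 0 < a < d,
  back z = iter a si z, Fx (back z) & forall j, 0 < j < a -> Fr (iter j si z)].
Proof.
move=> Frz /orbit_fixed [x xin Fxx].
rewrite -porbitV in xin.
case: (porbit_iter xin) => i ilt xi.
have il : i < d by apply: (leq_trans ilt); apply: card_porbit_le.
have i0 : 0 < i.
  by case: i {ilt il} xi => // xz; move: Fxx; rewrite xz /= => /FxN; rewrite Frz.
have [k [/andP [k0 ki] wk Pk km]] := @walk_min d si Fx d z i
  (ltac:(by rewrite i0 ltnW)) (ltac:(by rewrite -xi)).
exists k; split.
- by rewrite k0 (leq_ltn_trans ki il).
- exact: wk.
- by rewrite /back wk.
- by move=> j /km; rewrite hF.
Qed.

Lemma fwd_spec x : Fx x -> exists n, [/\ 0 < n <= d,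
  fwd x = iter n s x, Fx (fwd x) & forall j, 0 < j < n -> Fr (iter j s x)].
Proof.
move=> Fxx.
have n0 : 0 < #|porbit s x| by rewrite lt0n card_porbit_neq0.
have [k [/andP [k0 ki] wk Pk km]] := @walk_min d s Fx d x #|porbit s x|
  (ltac:(by rewrite n0 card_porbit_le)) (ltac:(by rewrite iter_porbit)).
exists k; split.
- by rewrite k0 (leq_trans ki (card_porbit_le _ _)).
- exact: wk.
- by rewrite /fwd wk.
- by move=> j /km; rewrite hF.
Qed.

Lemma valid_cons f : valid f -> cons.
Proof.
move=> V; apply/forallP => x; apply/implyP => Fxx.
have [n [/andP [n0 _] wn Fw hj]] := fwd_spec Fxx.
by rewrite -(hGx f Fw) -(hHx f Fxx) wn (chain_fwd V n0 hj).
Qed.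

Lemma valid_back f z : valid f -> Fr z -> ~~ pure z -> G f z = B (back z).
Proof.
move=> V Frz npz.
have [a [/andP [a0 _] wa Fw hj]] := back_spec Frz npz.
by rewrite -(hHx f Fw) wa (chain_bwd V a0 hj).
Qed.

Lemma valid_pure f z : valid f -> pure z -> forall n, G f (iter n s z) = G f z.
Proof.
move=> /forallP V pz; elim => // n IH.
have Fw : Fr (iter n s z).
  by move/subsetP: pz => /(_ _ (iter_mem s z n)); rewrite inE.
by rewrite iterS; move/eqP: (V (iter n s z)) => ->; rewrite -free_eq.
Qed.


Definition hext (h : {ffun PCT -> T}) (C : {set 'I_d}) : T :=
  odflt t0 (omap h (insub C)).

Definition Phi (h : {ffun PCT -> T}) : {ffun J -> T} :=
  [ffun y => if pure (e y) then hext h (porbit s (e y)) else B (back (e y))].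

Definition Psi (f : {ffun J -> T}) : {ffun PCT -> T} :=
  [ffun C : PCT => odflt t0 (omap f [pick y | e y \in val C])].

Lemma pure_PC z : pure z -> porbit s z \in PC.
Proof. by move=> pz; rewrite inE; apply/andP; split; [apply: imset_f | exact: pz]. Qed.

Lemma Phi_free h z : Fr z -> G (Phi h) z = H (Phi h) z /\
  G (Phi h) z = if pure z then hext h (porbit s z) else B (back z).
Proof.
by move=> /esurj [y ->]; rewrite hGe hHe ffunE.
Qed.

Lemma Phi_inj : injective Phi.
Proof.
move=> h1 h2 E; apply/ffunP => C.
have := valP C; rewrite inE => /andP [/imsetP [x _ Cx] sub].
have Frx : Fr x by move/subsetP: sub => /(_ x); rewrite Cx porbit_id inE => /(_ isT).
case: (esurj Frx) => y xy.
have pz : pure (e y) by rewrite /pure -xy -Cx.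
have := congr1 (fun f : {ffun J -> T} => f y) E; rewrite !ffunE pz /hext -xy -Cx valK.
by [].
Qed.

Lemma porbit_s z : porbit s (s z) = porbit s z.
Proof. by have := porbit_perm s 1 z; rewrite expg1. Qed.

Lemma pure_s z : pure (s z) = pure z.
Proof. by rewrite /pure porbit_s. Qed.

Lemma in_porbit_s z : z \in porbit s (s z).
Proof. by rewrite porbit_s porbit_id. Qed.

Lemma npure_fixed z x : x \in porbit s z -> Fx x -> ~~ pure z.
Proof. by move=> xin Fxx; apply/subsetPn; exists x => //; rewrite inE hF negbK. Qed.

Lemma d_pos (r : 'I_d) : 0 < d.
Proof. by apply: leq_ltn_trans (ltn_ord r). Qed.

Lemma valid_Phi h : cons -> valid (Phi h).
Proof.
move=> /forallP C; apply/forallP => r; apply/eqP.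
have d0 := d_pos r.
case: (boolP (Fx r)) => Fxr; case: (boolP (Fx (s r))) => Fxs.
-
  rewrite hGx // hHx //; move/implyP: (C r) => /(_ Fxr) /eqP <-.
  by congr A; rewrite /fwd (@walk_eq d s Fx d r 1) // => j; rewrite lt01 //.
-
  have Frs : Fr (s r) by rewrite hF.
  have [_ ->] := Phi_free h Frs.
  rewrite hHx // (negbTE (npure_fixed (in_porbit_s r) Fxr)).
  congr B; rewrite /back (@walk_eq d si Fx d (s r) 1) ?d0 //= /si ?permK // => j; rewrite lt01 //.
-
  have Frr : Fr r by rewrite hF.
  have npr : ~~ pure r by apply: (npure_fixed (iter_mem s r 1)).
  have [E1 E2] := Phi_free h Frr; rewrite -E1 E2.
  rewrite hGx // (negbTE npr).
  have [a [/andP [a0 ad] wa Fw hj]] := back_spec Frr npr.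
  move/implyP: (C (back r)) => /(_ Fw) /eqP <-.
  congr A; rewrite /fwd (@walk_eq d s Fx d _ a.+1).
  + by rewrite iterS wa iter_sV // subnn.
  + by rewrite ad.
  + by rewrite iterS wa iter_sV // subnn.
  + move=> j /andP [j0 ja]; rewrite wa iter_sV //; rewrite -hF.
    case Ej: (a - j) => [|k]; first by [].
    rewrite -Ej; apply: hj; lia.
-
  have Frr : Fr r by rewrite hF.
  have Frs : Fr (s r) by rewrite hF.
  have [<- ->] := Phi_free h Frr; have [_ ->] := Phi_free h Frs.
  rewrite pure_s porbit_s; case: ifP => // /negbT npr.
  congr B.
  have [a [/andP [a0 ad] wa Fw hj]] := back_spec Frr npr.
  rewrite wa /back (@walk_eq d si Fx d (s r) a.+1) ?ad //.
  + by rewrite iterSr /si permK.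
  + by rewrite iterSr /si permK -wa.
  + move=> j /andP [j0 ja]; rewrite -hF.
    case: j j0 ja => [|j] // _ ja.
    rewrite iterSr /si permK.
    case: j ja => [|j] ja; first exact: Frr.
    apply: hj; lia.
Qed.

Lemma valid_PhiPsi f : valid f -> Phi (Psi f) = f.
Proof.
move=> V; apply/ffunP => y; rewrite ffunE.
case: ifP => [pz | /negbT npz]; last by rewrite -(valid_back V (eFr y) npz) hGe.
rewrite /hext (insubT (fun C => C \in PC) (pure_PC pz)) /= ffunE /=.
case: pickP => [y' /= Hy' | /(_ y) /=]; last by rewrite porbit_id.
case: (porbit_iter Hy') => n _ En.
by rewrite -(hGe f y') En (valid_pure V pz) hGe.
Qed.

Lemma count_valid : #|[set f | valid f]| = if cons then #|T| ^ #|PC| else 0.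
Proof.
case: ifP => [Cn | /negbT nC].
  have -> : [set f | valid f] = Phi @: setT.
    apply/setP => f; rewrite inE; apply/idP/imsetP => [V | [h _ ->]].
      by exists (Psi f); rewrite ?inE ?valid_PhiPsi.
    exact: valid_Phi.
  rewrite card_imset; last exact: Phi_inj.
  rewrite cardsT card_ffun card_sig; congr (_ ^ _); apply: eq_card => C.

apply: eq_card0 => f; rewrite inE; apply/negP => /valid_cons; apply/negP.
exact: nC.
Qed.

Lemma main_abstract :
  \sum_(f : {ffun J -> T}) \prod_(r < d) (G f (s r) == H f r)
   = (\prod_(x < d | Fx x) (A (fwd x) == B x)) * #|T| ^ #|PC|.
Proof.
rewrite (eq_bigr (fun f => (valid f : nat))); last first.
  by move=> f _; rewrite (prod_bool xpredT) /valid.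
rewrite sum_bool count_valid prod_bool /cons.
by case: ifP; rewrite ?mul1n ?mul0n.
Qed.

Lemma fwd_fixed x : Fx x -> Fx (fwd x).
Proof. by case/fwd_spec => n []. Qed.

End Main.

Lemma concat_l p q (T : Type) (a : 'I_p -> T) (b : 'I_q -> T) x :
  concat a b (lshift q x) = a x.
Proof.
rewrite /concat; case: split_ordP => [j /lshift_inj -> // | j /eqP].
by rewrite eq_lrshift.
Qed.

Lemma concat_r p q (T : Type) (a : 'I_p -> T) (b : 'I_q -> T) y :
  concat a b (rshift p y) = b y.
Proof.
rewrite /concat; case: split_ordP => [j /eqP | j /rshift_inj -> //].
by rewrite eq_rlshift.
Qed.

Lemma concat_lo p q (T : Type) (a : 'I_p -> T) (b b' : 'I_q -> T) (r : 'I_(p + q)) :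
  r < p -> concat a b r = concat a b' r.
Proof. by rewrite /concat; case: splitP. Qed.

Lemma concat_hi p q (T : Type) (a a' : 'I_p -> T) (b : 'I_q -> T) (r : 'I_(p + q)) :
  p <= r -> concat a b r = concat a' b r.
Proof. by rewrite /concat; case: splitP => // j ->; rewrite leqNgt ltn_ord. Qed.

Lemma concat_lo_insubd p q (T : Type) (a : 'I_p -> T) (b : 'I_q -> T) (r : 'I_(p + q)) x0 :
  r < p -> concat a b r = a (insubd x0 (val r)).
Proof.
rewrite /concat; case: splitP => [j Ej _ | j Ej]; last by [].
by congr a; apply: val_inj; rewrite val_insubd /= Ej ltn_ord.
Qed.

Lemma concat_hi_insubd p q (T : Type) (a : 'I_p -> T) (b : 'I_q -> T) (r : 'I_(p + q)) y0 :
  p <= r -> concat a b r = b (insubd y0 (val r - p)).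
Proof.
rewrite /concat; case: splitP => [j Ej | j Ej _]; first by rewrite Ej leqNgt ltn_ord.
by congr b; apply: val_inj; rewrite val_insubd /= Ej addKn ltn_ord.
Qed.

Theorem lemma2p4 (m n p q : nat) (hm : 2 <= m) (hn : 2 <= n)
  (i k : 'I_p -> 'I_m) (j l : 'I_q -> 'I_n) (s : 'S_(p + q)) :
  \sum_(ss : {ffun 'I_q -> 'I_m}) delta_perm s (concat i ss) (concat k ss)
    = delta_fun (pr1 s) i k * m ^ kappa1 s
  /\
  \sum_(t : {ffun 'I_p -> 'I_n}) delta_perm s (concat t j) (concat t l)
    = delta_fun (pr2 s) j l * n ^ kappa2 s.
Proof.
have m0 : 0 < m by apply: leq_trans hm.
have n0 : 0 < n by apply: leq_trans hn.
split.
- pose t0 : 'I_m := Ordinal m0.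
  have hF : forall r : 'I_(p + q), (p <= val r) = ~~ (val r < p) by move=> r; rewrite leqNgt.
  have esurj : forall r : 'I_(p + q), p <= val r -> exists y, r = rshift p y.
    move=> r; case: (split_ordP r) => [x -> | y -> _]; last by exists y.
    by rewrite /= leqNgt ltn_ord.
  have eFr : forall y : 'I_q, p <= val (rshift p y) by move=> y; rewrite /= leq_addr.
  have := @main_abstract (p + q) 'I_q 'I_m t0 s (fun r => val r < p) (fun r => p <= val r)
    hF (@rshift p q) esurj eFr (concat i (fun _ => t0)) (concat k (fun _ => t0))
    (fun f => concat i f) (fun f => concat k f)
    (fun f y => concat_r _ _ _) (fun f y => concat_r _ _ _)
    (fun f r Hr => concat_lo _ _ _ Hr) (fun f r Hr => concat_lo _ _ _ Hr).
  rewrite /delta_perm => ->; rewrite card_ord; congr (_ * _).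
  rewrite big_split_ord /= [X in _ * X]big1 ?muln1; last first.
    by move=> y; rewrite ltnNge leq_addr.
  rewrite /delta_fun; apply: eq_big => [x | x _]; first by rewrite /= ltn_ord.
  rewrite concat_l; congr (_ == _).
  have Fw := @fwd_fixed (p + q) s (fun r => val r < p) (fun r => p <= val r) hF _
    (ltn_ord x : val (lshift q x) < p).
  by rewrite (concat_lo_insubd _ _ x Fw).
- pose t0 : 'I_n := Ordinal n0.
  have hF : forall r : 'I_(p + q), (val r < p) = ~~ (p <= val r) by move=> r; rewrite ltnNge.
  have esurj : forall r : 'I_(p + q), val r < p -> exists y, r = lshift q y.
    move=> r; case: (split_ordP r) => [x -> _ | y ->]; first by exists x.
    by [].
  have eFr : forall y : 'I_p, val (lshift q y) < p by move=> y; rewrite /= ltn_ord.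
  have := @main_abstract (p + q) 'I_p 'I_n t0 s (fun r => p <= val r) (fun r => val r < p)
    hF (@lshift p q) esurj eFr (concat (fun _ => t0) j) (concat (fun _ => t0) l)
    (fun f => concat f j) (fun f => concat f l)
    (fun f y => concat_l _ _ _) (fun f y => concat_l _ _ _)
    (fun f r Hr => concat_hi _ _ _ Hr) (fun f r Hr => concat_hi _ _ _ Hr).
  rewrite /delta_perm => ->; rewrite card_ord; congr (_ * _).
  rewrite big_split_ord /= [X in X * _]big1 ?mul1n; last first.
    by move=> x; rewrite leqNgt ltn_ord.
  rewrite /delta_fun; apply: eq_big => [y | y _]; first by rewrite /= leq_addr.
  rewrite concat_r; congr (_ == _).
  have Fw := @fwd_fixed (p + q) s (fun r => p <= val r) (fun r => val r < p) hF _
    (leq_addr y p : p <= val (rshift p y)).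
  by rewrite (concat_hi_insubd _ _ y Fw).
Qed.
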